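(* Let $\mathcal{K}=(\mathcal{R},\mathcal{T})$ be an $\mathcal{ALCP}$ knowledge base over a propositional language $\mathcal{L}$, where $\mathcal{R}$ is consistent. Then $\mathcal{K}$ is ME-consistent if and only if for every $v\in\mathrm{Int}(\mathcal{L})$ with $P^{ME}_{\mathcal{R}}(v)>0$, the classical TBox $\mathcal{T}_v$ is consistent.
   Context: $\mathcal{L}$ is a propositional language over a finite set $\mathrm{sig}(\mathcal{L})$ of propositional variables; $\mathrm{Int}(\mathcal{L})$ is the set of all truth assignments of these variables. A probability distribution over $\mathcal{L}$ is a map $P:\mathrm{Int}(\mathcal{L})\to[0,1]$ with $\sum_v P(v)=1$, extended to formulas by $P(\phi)=\sum_{v\models\phi}P(v)$. A probabilistic constraint is an expression $c_0+\sum_{i=1}^k c_i\,\mathsf{p}(\phi_i)\ge 0$ with $c_i\in\mathbb{R}$ and $\phi_i\in\mathcal{L}$; $P$ satisfies it iff $c_0+\sum_i c_iP(\phi_i)\ge 0$. For a set $\mathcal{R}$ of constraints, $\mathrm{Mod}(\mathcal{R})$ is the set of distributions satisfying all of them, and $\mathcal{R}$ is consistent iff $\mathrm{Mod}(\mathcal{R})\neq\emptyset$. For consistent $\mathcal{R}$, $P^{ME}_{\mathcal{R}}$ denotes the unique element of $\mathrm{Mod}(\mathcal{R})$ maximizing the entropy $H(P)=-\sum_{v}P(v)\log P(v)$. Concepts are built from disjoint sets $N_C$ (concept names) and $N_R$ (role names) by $C::=A\mid\neg C\mid C\sqcap C\mid \exists r.C$ ($A\in N_C$, $r\in N_R$).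 An $\mathcal{L}$-GCI is $\langle C\sqsubseteq D:\kappa\rangle$ with concepts $C,D$ and $\kappa\in\mathcal{L}$; an $\mathcal{L}$-TBox is a finite set of $\mathcal{L}$-GCIs; a knowledge base (KB) is a pair $\mathcal{K}=(\mathcal{R},\mathcal{T})$ of a set $\mathcal{R}$ of probabilistic constraints over $\mathcal{L}$ and an $\mathcal{L}$-TBox $\mathcal{T}$. A possible world is $\mathcal{I}=(\Delta^{\mathcal{I}},\cdot^{\mathcal{I}},v^{\mathcal{I}})$ with nonempty domain $\Delta^{\mathcal{I}}$, $A^{\mathcal{I}}\subseteq\Delta^{\mathcal{I}}$, $r^{\mathcal{I}}\subseteq\Delta^{\mathcal{I}}\times\Delta^{\mathcal{I}}$, extended by $(\neg C)^{\mathcal{I}}=\Delta^{\mathcal{I}}\setminus C^{\mathcal{I}}$, $(C\sqcap D)^{\mathcal{I}}=C^{\mathcal{I}}\cap D^{\mathcal{I}}$, $(\exists r.C)^{\mathcal{I}}=\{d\mid\exists e\,((d,e)\in r^{\mathcal{I}}, e\in C^{\mathcal{I}})\}$, and $v^{\mathcal{I}}\in\mathrm{Int}(\mathcal{L})$. $\mathcal{I}$ is a model of $\langle C\sqsubseteq D:\kappa\rangle$ iff $v^{\mathcal{I}}\not\models\kappa$ or $C^{\mathcal{I}}\subseteq D^{\mathcal{I}}$, and of $\mathcal{T}$ iff of all its GCIs. For $v\in\mathrm{Int}(\mathcal{L})$, $\mathcal{T}_v=\{C\sqsubseteq D\mid \langle C\sqsubseteq D:\kappa\rangle\in\mathcal{T},\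 v\models\kappa\}$ is a classical $\mathcal{ALC}$ TBox; it is consistent iff some classical interpretation $(\Delta,\cdot)$ satisfies $C^{\mathcal{I}}\subseteq D^{\mathcal{I}}$ for all its members. An $\mathcal{ALCP}$-interpretation is $\mathcal{P}=(\mathfrak{I},P_{\mathfrak{I}})$ with $\mathfrak{I}$ a nonempty finite set of possible worlds and $P_{\mathfrak{I}}$ a probability distribution on $\mathfrak{I}$; it induces $P^{\mathcal{P}}(v)=\sum_{\mathcal{I}\in\mathfrak{I},v^{\mathcal{I}}=v}P_{\mathfrak{I}}(\mathcal{I})$. $\mathcal{P}$ is a model of $\mathcal{K}$ iff every world of $\mathfrak{I}$ is a model of $\mathcal{T}$ and $P^{\mathcal{P}}\in\mathrm{Mod}(\mathcal{R})$; it is an ME-$\mathcal{ALCP}$-model if moreover $P^{\mathcal{P}}=P^{ME}_{\mathcal{R}}$. $\mathcal{K}$ is ME-consistent iff it has an ME-$\mathcal{ALCP}$-model. *)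

(* Defs.v *)
From Stdlib Require List.
From HB Require Import structures.
From mathcomp Require Import all_boot all_order all_algebra.
From mathcomp Require Import boolp classical_sets reals exp.
Set Implicit Arguments.
Unset Strict Implicit.
Unset Printing Implicit Defensive.
Import Order.TTheory GRing.Theory Num.Theory.
Local Open Scope ring_scope.

Section Prop_logic.
Variable S : finType.

Inductive formula : Type :=
| FTop : formula
| FBot : formula
| FVar : S -> formula
| FNot : formula -> formula
| FAnd : formula -> formula -> formula
| FOr  : formula -> formula -> formula
| FImp : formula -> formula -> formula.

Definition Int := {ffun S -> bool}.

Fixpoint sat (v : Int) (phi : formula) : bool :=
  match phi with
  | FTop => true
  | FBot => false
  | FVar x => v x
  | FNot p => ~~ sat v p
  | FAnd p q => sat v p && sat v q
  | FOr p q => sat v p || sat v q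
  | FImp p q => sat v p ==> sat v q
  end.
End Prop_logic.

Arguments FTop {S}. Arguments FBot {S}.

Section Prob.
Variable R : realType.
Variable S : finType.

Definition is_distribution (P : Int S -> R) : Prop :=
  (forall v, 0 <= P v) /\ \sum_(v : Int S) P v = 1.

Definition probF (P : Int S -> R) (phi : formula S) : R :=
  \sum_(v : Int S | sat v phi) P v.

Record constraint := Constraint {
  c0 : R;
  cterms : seq (R * formula S) }.

Definition sat_constraint (P : Int S -> R) (c : constraint) : Prop :=
  0 <= c0 c + \sum_(t <- cterms c) t.1 * probF P t.2.

Definition constraints := constraint -> Prop.

Definition Mod (Rs : constraints) (P : Int S -> R) : Prop :=
  is_distribution P /\ forall c, Rs c -> sat_constraint P c.

Definition consistent (Rs : constraints) : Prop := exists P, Mod Rs P.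

(* entropy, with the convention 0 log 0 = 0 *)
Definition entropy (P : Int S -> R) : R :=
  - \sum_(v : Int S) (if P v == 0 then 0 else P v * ln (P v)).

Definition is_ME (Rs : constraints) (P : Int S -> R) : Prop :=
  Mod Rs P /\ forall Q, Mod Rs Q -> entropy Q <= entropy P.

(* P^ME_R : the (unique, for consistent R) entropy maximizer of Mod(R);
   chosen by classical choice (an arbitrary value if there is none). *)
Definition PME (Rs : constraints) : Int S -> R :=
  match pselect (exists P, is_ME Rs P) with
  | left h => projT1 (cid h)
  | right _ => fun _ => 0
  end.
End Prob.

Section DL.
Variables (NC NR : Type).

Inductive concept : Type :=
| CAtom : NC -> concept
| CNot  : concept -> concept
| CAnd  : concept -> concept -> concept
| CEx   : NR -> concept -> concept.

Fixpoint cinterp (D : Type) (AI : NC -> D -> Prop) (rI : NR -> D -> D -> Prop)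
  (C : concept) : D -> Prop :=
  match C with
  | CAtom A => AI A
  | CNot C => fun d => ~ cinterp AI rI C d
  | CAnd C1 C2 => fun d => cinterp AI rI C1 d /\ cinterp AI rI C2 d
  | CEx r C => fun d => exists e, rI r d e /\ cinterp AI rI C e
  end.

Definition classical_TBox := seq (concept * concept).

Definition TBox_consistent (T : classical_TBox) : Prop :=
  exists (D : Type) (d0 : D) (AI : NC -> D -> Prop) (rI : NR -> D -> D -> Prop),
    forall g, List.In g T -> forall d, cinterp AI rI g.1 d -> cinterp AI rI g.2 d.

Variable S : finType.

Record GCI := MkGCI { gci_lhs : concept; gci_rhs : concept; gci_ctx : formula S }.
Definition LTBox := seq GCI.

Definition TBox_at (T : LTBox) (v : Int S) : classical_TBox :=
  [seq (gci_lhs g, gci_rhs g) | g <- T & sat v (gci_ctx g)].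

Record world := MkWorld {
  wdom : Type;
  wpt : wdom;                         (* Delta nonempty *)
  wA : NC -> wdom -> Prop;
  wr : NR -> wdom -> wdom -> Prop;
  wv : Int S }.

Arguments wA : clear implicits.
Arguments wr : clear implicits.

Definition world_models_GCI (I : world) (g : GCI) : Prop :=
  ~~ sat (wv I) (gci_ctx g) \/
  forall d, cinterp (wA I) (wr I) (gci_lhs g) d -> cinterp (wA I) (wr I) (gci_rhs g) d.

Definition world_models (I : world) (T : LTBox) : Prop :=
  forall g, List.In g T -> world_models_GCI I g.

Variable R : realType.

Record ALCP_interp := MkALCP {
  aW : finType;
  aworld : aW -> world;
  aP : aW -> R;
  aW_nonempty : (0 < #|aW|)%N;
  aP_ge0 : forall w, 0 <= aP w;
  aP_sum1 : \sum_(w : aW) aP w = 1 }.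

Definition induced (Pi : ALCP_interp) (v : Int S) : R :=
  \sum_(w : aW Pi | wv (aworld w) == v) aP w.

Definition KB := (constraints R S * LTBox)%type.

Definition is_model (K : KB) (Pi : ALCP_interp) : Prop :=
  (forall w : aW Pi, world_models (aworld w) K.2) /\ Mod K.1 (induced Pi).

Definition is_ME_model (K : KB) (Pi : ALCP_interp) : Prop :=
  is_model K Pi /\ forall v, induced Pi v = PME K.1 v.

Definition ME_consistent (K : KB) : Prop := exists Pi, is_ME_model K Pi.
End DL.

(* Main.v *)
Require Import Defs.
From mathcomp Require Import all_boot all_order all_algebra.
From mathcomp Require Import reals.
From HB Require Import structures.
From mathcomp Require Import all_classical all_reals all_analysis.
From mathcomp Require Import ring lra.
Import Order.TTheory GRing.Theory Num.Theory.
Import numFieldNormedType.Exports.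
Local Open Scope classical_set_scope.
Local Open Scope ring_scope.

Section Z.
Import ArrowAsProduct.
Variable R : realType.
Variable S : finType.

Lemma le_sum1 (P : Int S -> R) v : is_distribution P -> P v <= 1.
Proof.
case=> P0 <-; rewrite (bigD1 v) //= lerDl; apply: sumr_ge0 => ? _; exact: P0.
Qed.



Definition xlnx (x : R) : R := x * ln x.

Lemma xlnx_le (x : R) : xlnx x <= x ^+ 2.
Proof.
rewrite /xlnx; have [x0|x0] := leP x 0.
  by rewrite ln0 // mulr0 sqr_ge0.
by rewrite expr2 ler_pM2l // ltW // ln_sublinear.
Qed.

Lemma xlnx_ge (x : R) : - (2 * Num.sqrt `|x|) <= xlnx x.
Proof.
rewrite /xlnx; have [x0|x0] := leP x 0.
  by rewrite ln0 // mulr0 oppr_le0 mulr_ge0 // sqrtr_ge0.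
set s := Num.sqrt `|x|.
have s0 : 0 < s by rewrite sqrtr_gt0 normr_gt0 gt_eqF.
have xs : x = s ^+ 2 by rewrite sqr_sqrtr // gtr0_norm.
have lns : ln x = 2 * ln s by rewrite xs lnXn // mulr_natl.
have lnV : - s^-1 < ln s.
  have := @ln_sublinear R s^-1; rewrite invr_gt0 => /(_ s0).
  by rewrite lnV ?posrE // ltrNl.
rewrite lns xs.
have -> : - (2 * s) = s ^+ 2 * (2 * - s^-1).
  rewrite expr2 mulrN mulrN; congr (- _). by field; rewrite gt_eqF.
rewrite ler_pM2l ?exprn_gt0 // ler_pM2l // ltW //.
Qed.

Lemma xlnx_continuous : continuous xlnx.
Proof.
move=> x; have [x0|x0|->] := ltgtP x 0.
- apply: (near_cst_continuous 0); near=> y.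
  rewrite /xlnx ln0 ?mulr0 // ltW //; near: y; exact: lt_nbhsl.
- apply: continuousM; first exact: cvg_id.
  exact: continuous_ln.
- rewrite /continuous_at; have -> : xlnx 0 = 0 by rewrite /xlnx mul0r.
  apply: (@squeeze_cvgr _ _ _ _ (fun x => - (2 * Num.sqrt `|x|)) (fun x => x ^+ 2)).
  + by near=> y; rewrite xlnx_le xlnx_ge.
  + have h1 : continuous_at (0:R) (Num.sqrt \o (fun x : R => `|x|)).
      exact: continuous_comp (@norm_continuous _ R^o 0) (@sqrt_continuous R _).
    rewrite /continuous_at /= normr0 sqrtr0 in h1.
    have := cvgN (cvgM (cvg_cst (2:R)) h1).
    rewrite mulr0 oppr0; apply.
  + have h : continuous_at (0:R) (fun x : R => x ^+ 2).
      by apply: continuousM; exact: cvg_id.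
    by move: h; rewrite /continuous_at expr2 mulr0.
Unshelve. all: by end_near.
Qed.

Lemma cont_sum (T : topologicalType) (I : Type) (r : seq I) (p : pred I)
  (F : I -> T -> R) : (forall i, continuous (F i)) ->
  continuous (fun x => \sum_(i <- r | p i) F i x).
Proof.
move=> Fc; elim: r => [|i r IH].
  under eq_fun do rewrite big_nil; exact: cst_continuous.
under eq_fun do rewrite big_cons.
case: (p i).
  move=> x; apply: continuousD; [exact: Fc | exact: IH].
exact: IH.
Qed.

Lemma cont_cM (T : topologicalType) (c : R) (f : T -> R) : continuous f ->
  continuous (fun x => c * f x).
Proof. move=> fc x; apply: continuousM; [exact: cst_continuous | exact: fc]. Qed.

Lemma cont_proj (v : Int S) : continuous (fun P : Int S -> R => P v).
Proof. exact: (@proj_continuous _ (fun _ : Int S => R) v). Qed.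

Lemma entropyE (P : Int S -> R) : entropy P = - \sum_v xlnx (P v).
Proof.
rewrite /entropy; congr (- _); apply: eq_bigr => v _.
by case: eqP => [->|//]; rewrite /xlnx mul0r.
Qed.

Lemma cont_entropy : continuous (fun P : Int S -> R => entropy P).
Proof.
have -> : (fun P : Int S -> R => entropy P) = (fun P => - \sum_v xlnx (P v)).
  by apply: funext => P; rewrite entropyE.
move=> P; apply: continuousN; apply: (cont_sum _ _ _ _ (fun v (Q : Int S -> R) => xlnx (Q v))).
move=> v Q; apply: continuous_comp; [exact: cont_proj | exact: xlnx_continuous].
Qed.

Lemma cont_probF phi : continuous (fun P : Int S -> R => probF P phi).
Proof. rewrite /probF; apply: (cont_sum _ _ _ _ (fun v (Q : Int S -> R) => Q v)) => v; exact: cont_proj. Qed.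

Lemma cont_constr c : continuous (fun P : Int S -> R =>
   c0 c + \sum_(t <- cterms c) t.1 * probF P t.2).
Proof.
move=> P; apply: continuousD; first exact: cst_continuous.
apply: (cont_sum _ _ _ _ (fun t (Q : Int S -> R) => t.1 * probF Q t.2)) => t.
apply: cont_cM; exact: cont_probF.
Qed.

Lemma ME_exists (Rs : constraints R S) : consistent Rs -> exists P, is_ME Rs P.
Proof.
move=> [P0 MP0].
pose A := [set P : Int S -> R | Mod Rs P].
have Aeq : A = (\bigcap_(v in [set: Int S]) ((fun P : Int S -> R => P v) @^-1` [set x | 0 <= x]))
   `&` ((fun P : Int S -> R => \sum_v P v) @^-1` [set x | x <= 1])
   `&` ((fun P : Int S -> R => \sum_v P v) @^-1` [set x | 1 <= x])
   `&` (\bigcap_(c in Rs) ((fun P : Int S -> R => c0 c + \sum_(t <- cterms c) t.1 * probF P t.2) @^-1` [set x | 0 <= x])).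
  apply/seteqP; split => P /=.
    move=> [[P0' P1] PR]; split; [split; [split|]|].
    - by move=> v _; exact: P0'.
    - by rewrite P1.
    - by rewrite P1.
    - by move=> c Rc; exact: PR.
  move=> [[[H0 H1] H2] H3]; split; [split|].
  - by move=> v; exact: H0.
  - by apply/eqP; rewrite eq_le H1 H2.
  - by move=> c Rc; exact: H3.
have Acl : closed A.
  rewrite Aeq; apply: closedI; [apply: closedI; [apply: closedI|]|].
  - apply: closed_bigI => v _; apply: preimage_closed; last exact: closed_ge.
    by move=> Q _; exact: cont_proj.
  - apply: preimage_closed; last exact: closed_le.
    move=> Q _; apply: (cont_sum _ _ _ _ (fun v (Q : Int S -> R) => Q v)) => v; exact: cont_proj.
  - apply: preimage_closed; last exact: closed_ge.
    move=> Q _; apply: (cont_sum _ _ _ _ (fun v (Q : Int S -> R) => Q v)) => v; exact: cont_proj.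
  - apply: closed_bigI => c _; apply: preimage_closed; last exact: closed_ge.
    by move=> Q _; exact: cont_constr.
have Acp : compact A.
  apply: (subclosed_compact Acl (tychonoff (fun v : Int S => @segment_compact R 0 1))).
  move=> P [PD _] v /=; rewrite in_itv /=; apply/andP; split.
    by case: PD.
  exact: le_sum1.
have A0 : A !=set0 by exists P0.
have [c cA cmax] := compact_EVT_max A0 Acp (continuous_subspaceT cont_entropy).
exists c; split; first by move: cA; rewrite inE.
by move=> Q MQ; apply: cmax; rewrite inE.
Qed.
End Z.

Lemma TBox_atP (NC NR : Type) (S : finType) (T : LTBox NC NR S) v g :
  List.In g (TBox_at T v) ->
  exists g', List.In g' T /\ sat v (gci_ctx g') /\ g = (gci_lhs g', gci_rhs g').
Proof.
elim: T => [//|a T IH] /=.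
rewrite /TBox_at /=; case Ha: (sat v (gci_ctx a)) => /=.
  case=> [<-|/IH [g' [h1 [h2 h3]]]]; first by exists a; split; [left|].
  by exists g'; split; [right|].
by move=> /IH [g' [h1 [h2 h3]]]; exists g'; split; [right|].
Qed.

Lemma TBox_atP2 (NC NR : Type) (S : finType) (T : LTBox NC NR S) v g :
  List.In g T -> sat v (gci_ctx g) -> List.In (gci_lhs g, gci_rhs g) (TBox_at T v).
Proof.
elim: T => [//|a T IH] /= Hin Hs.
rewrite /TBox_at /=; case Ha: (sat v (gci_ctx a)) => /=.
  case: Hin => [->|Hin]; [by left | right; exact: IH].
case: Hin => [Ea|Hin]; last exact: IH.
by move: Ha; rewrite Ea Hs.
Qed.

Theorem theorem1 (R : realType) (S : finType) (NC NR : Type)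
  (K : KB NC NR S R) :
  consistent K.1 ->
  (ME_consistent K <->
   forall v : Int S, 0 < PME K.1 v -> TBox_consistent (TBox_at K.2 v)).
Proof.
move=> Hc.
have [P0 HP0] := @ME_exists R S _ Hc.
set P := PME K.1.
have HP : is_ME K.1 P.
  rewrite /P /PME; case: pselect => [h|h]; first exact: (projT2 (cid h)).
  by exfalso; apply: h; exists P0.
have [[Pge0 Psum] _] := HP.1.
split.
- move=> [Pi [[Hw HM] Hind]] v Pv.
  have : 0 < Defs.induced Pi v by rewrite Hind.
  rewrite /Defs.induced; case: (@pickP (aW Pi) [pred w | wv (aworld w) == v]) => [w /eqP wv | none]; last first.
    by rewrite big_pred0 ?ltxx.
  move=> _.
  exists (wdom (aworld w)), (wpt (aworld w)), (@wA _ _ _ (aworld w)), (@wr _ _ _ (aworld w)).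
  move=> g /TBox_atP [g' [Hin [Hs ->]]] d /=.
  case: (Hw w g' Hin) => [Hn|Hi]; last exact: Hi.
  by move: Hn; rewrite wv Hs.
- move=> H.
  have [v0 Pv0] : exists v, 0 < P v.
    case: (pselect (exists v, 0 < P v)) => // hn; exfalso.
    have : \sum_v P v = 0.
      apply: big1 => v _; apply/eqP; rewrite eq_le Pge0 andbT leNgt; apply/negP => h.
      by apply: hn; exists v.
    by rewrite Psum => /eqP; rewrite oner_eq0.
  pose u w := if 0 < P w then w else v0.
  have Hu w : 0 < P (u w) by rewrite /u; case: ifP.
  have mk : forall w, {I : world NC NR S | wv I = u w /\ world_models I K.2}.
    move=> w; have := H _ (Hu w).
    move=> /cid [D /cid [d0 /cid [AI /cid [rI HI]]]].
    exists (MkWorld d0 AI rI (u w)); split => //.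
    move=> g Hg; rewrite /world_models_GCI /=.
    case Hs: (sat (u w) (gci_ctx g)); [right | by left].
    move=> d; apply: (HI (gci_lhs g, gci_rhs g)).
    exact: TBox_atP2.
  have ne : (0 < #|Int S|)%N by apply/card_gt0P; exists v0.
  pose Pi := @MkALCP NC NR S R (Int S) (fun w => sval (mk w)) P ne Pge0 Psum.
  have Hind : forall v, Defs.induced Pi v = P v.
    move=> v; rewrite /Defs.induced /=.
    transitivity (\sum_(w | w == v) P w); last by rewrite big_pred1_eq.
    rewrite big_mkcond [RHS]big_mkcond.
    apply: eq_bigr => w _; rewrite (proj1 (svalP (mk w))) /u.
    case hp: (0 < P w); first reflexivity.
    have P0w : P w = 0 by apply/eqP; rewrite eq_le Pge0 andbT leNgt hp.
    rewrite P0w; case: (_ == v); case: (w == v); reflexivity.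
  exists Pi; split; [split|].
  + by move=> w; exact: (proj2 (svalP (mk w))).
  + have -> : Defs.induced Pi = P by apply: funext.
    exact: HP.1.
  + exact: Hind.
Qed.
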